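(* Let $P$ and $Q$ be persistence diagrams, i.e. finite multisets of points in $\mathbb{R}^2$. Let $\pi:\mathbb{R}^2\to L$ be the projection onto the diagonal $L=\{(x,x)\mid x\in\mathbb{R}\}$, $\pi(p)=\big(\tfrac{p.x+p.y}{2},\tfrac{p.x+p.y}{2}\big)$, and set $\widehat P = P\cup\pi(Q)$ and $\widehat Q = Q\cup \pi(P)$ (as multisets). Let $\mu_{\widehat P}$ and $\nu_{\widehat Q}$ be the discrete measures induced by $\widehat P$ and $\widehat Q$ (each point carrying mass equal to its multiplicity). Then $$d_{OT}(\mu_{\widehat P},\nu_{\widehat Q}) \le 2\, d_W(P,Q).$$
   Context: For two discrete measures $\mu,\nu$ on a finite set $X\subset\mathbb{R}^2$ with equal total mass, $d_{OT}(\mu,\nu)=\min_{\tau}\sum_{x,y\in X}\tau(x,y)\|x-y\|_2$, where $\tau$ ranges over nonnegative measures on $X\times X$ whose two marginals are $\mu$ and $\nu$. For finite multisets $A,B\subset\mathbb{R}^2$, an augmented matching is a subset $\Gamma\subset (A\cup\pi(B))\times(B\cup\pi(A))$ such that each element of $A$ and of $B$ (counted with multiplicity) appears in exactly one pair of $\Gamma$, and every pair $(a,b)\in\Gamma$ has one of the forms: (1) $a\in A,b\in B$; (2) $a\in A$, $b=\pi(a)$; (3) $a=\pi(b)$, $b\in B$. The 1-Wasserstein distance between persistence diagrams is $d_W(P,Q)=\min_\Gamma\sum_{(p,q)\in\Gamma}\|p-q\|_2$, the minimum over all augmented matchings $\Gamma$ for $P$ and $Q$. *)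

(* Defs.v *)
From HB Require Import structures.
From mathcomp Require Import all_boot all_order all_algebra.
From mathcomp Require Import boolp classical_sets reals.
Set Implicit Arguments. Unset Strict Implicit. Unset Printing Implicit Defensive.
Import Order.TTheory GRing.Theory Num.Theory.
Local Open Scope ring_scope.
Local Open Scope classical_set_scope.

Section PD.
Variable R : realType.
Notation pt := (R * R)%type.

Definition dist2 (p q : pt) : R := Num.sqrt ((p.1 - q.1) ^+ 2 + (p.2 - q.2) ^+ 2).

Definition diagproj (p : pt) : pt := ((p.1 + p.2) / 2, (p.1 + p.2) / 2).

(* A persistence diagram is a finite multiset of points, represented by a
   sequence; its elements (counted with multiplicity) are its positions.
   A pair of an augmented matching is tagged by its kind:
     inl (inl (i, j))  : (P_i, Q_j)            (type 1)
     inl (inr i)       : (P_i, pi(P_i))        (type 2)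
     inr j             : (pi(Q_j), Q_j)        (type 3)                    *)
Definition mtag (m n : nat) := ((('I_m * 'I_n) + 'I_m) + 'I_n)%type.

Definition tagP m n (i : 'I_m) (g : mtag m n) : bool :=
  match g with
  | inl (inl (i', _)) => i' == i
  | inl (inr i') => i' == i
  | inr _ => false
  end.

Definition tagQ m n (j : 'I_n) (g : mtag m n) : bool :=
  match g with
  | inl (inl (_, j')) => j' == j
  | inl (inr _) => false
  | inr j' => j' == j
  end.

Definition aug_matching (P Q : seq pt) (G : {set mtag (size P) (size Q)}) : Prop :=
  (forall i : 'I_(size P), #|[set g in G | tagP i g]| = 1%N) /\
  (forall j : 'I_(size Q), #|[set g in G | tagQ j g]| = 1%N).

Definition tag_cost (P Q : seq pt) (g : mtag (size P) (size Q)) : R :=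
  match g with
  | inl (inl (i, j)) => dist2 (nth (0, 0) P i) (nth (0, 0) Q j)
  | inl (inr i) => dist2 (nth (0, 0) P i) (diagproj (nth (0, 0) P i))
  | inr j => dist2 (diagproj (nth (0, 0) Q j)) (nth (0, 0) Q j)
  end.

Definition matching_cost (P Q : seq pt) (G : {set mtag (size P) (size Q)}) : R :=
  \sum_(g in G) tag_cost g.

(* d_W(P,Q) = min over augmented matchings (written as inf; it is attained) *)
Definition dW (P Q : seq pt) : R :=
  inf [set c | exists G : {set mtag (size P) (size Q)},
      aug_matching G /\ c = matching_cost G].

(* X is a finite set of points given by a duplicate-free sequence;
   measures on X are given by their mass functions mu, nu : pt -> R.       *)
Definition transport_plan (X : seq pt) (mu nu : pt -> R)
    (tau : 'I_(size X) -> 'I_(size X) -> R) : Prop :=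
  [/\ forall a b, 0 <= tau a b,
      forall a, \sum_b tau a b = mu (nth (0, 0) X a)
    & forall b, \sum_a tau a b = nu (nth (0, 0) X b)].

Definition plan_cost (X : seq pt) (tau : 'I_(size X) -> 'I_(size X) -> R) : R :=
  \sum_a \sum_b tau a b * dist2 (nth (0, 0) X a) (nth (0, 0) X b).

Definition dOT (X : seq pt) (mu nu : pt -> R) : R :=
  inf [set c | exists tau : 'I_(size X) -> 'I_(size X) -> R,
      @transport_plan X mu nu tau /\ c = @plan_cost X tau].

Definition mset_measure (s : seq pt) (x : pt) : R := (count_mem x s)%:R.

Definition hatP (P Q : seq pt) : seq pt := P ++ map diagproj Q.

End PD.

(* Main.v *)
Require Import Defs.
From HB Require Import structures.
From mathcomp Require Import all_boot all_order all_algebra.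
From mathcomp Require Import boolp classical_sets reals.
From mathcomp Require Import ring lra.
Import Order.TTheory GRing.Theory Num.Theory.
Local Open Scope ring_scope.

Lemma sum_nth_count (T : Type) (x0 : T) (s : seq T) (p : pred T) :
  (\sum_(i < size s) p (nth x0 s i))%N = count p s.
Proof.
elim: s => [|y s IH]; first by rewrite big_ord0.
by rewrite /= big_ord_recl /= IH.
Qed.

Lemma sum_pick (n : nat) (i0 : 'I_n) (F : 'I_n -> nat) :
  (\sum_i (i0 == i) * F i)%N = F i0.
Proof.
rewrite (bigD1 i0) //= eqxx mul1n big1 ?addn0 // => i /negPf.
by rewrite eq_sym => ->.
Qed.

Lemma sum_bool_card (T : finType) (G : {set T}) (b : pred T) :
  (\sum_(g in G) b g)%N = #|[set g in G | b g]|.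
Proof.
rewrite -big_mkcondr /= sum1_card; apply: eq_card => g.
by rewrite !inE.
Qed.

Lemma sum_eq_R (R : realType) (T : eqType) (s : seq T) (t : T) :
  \sum_(y <- s) ((y == t)%:R : R) = (count_mem t s)%:R.
Proof.
elim: s => [|y s IH]; first by rewrite big_nil.
by rewrite big_cons IH /= natrD eq_sym.
Qed.

Lemma sum_uniq_one (R : realType) (T : eqType) (x0 : T) (X : seq T) (t : T) :
  uniq X -> t \in X -> \sum_(b < size X) ((nth x0 X b == t)%:R : R) = 1.
Proof.
move=> uX tX.
have -> : \sum_(b < size X) ((nth x0 X b == t)%:R : R) = ((\sum_(b < size X) (nth x0 X b == t))%N)%:R.
  by rewrite natr_sum.
by rewrite (@sum_nth_count _ x0 X (fun y => y == t)) count_uniq_mem // tX.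
Qed.

Lemma diag_lip (R : realType) (p q : R * R) :
  dist2 (diagproj q) (diagproj p) <= dist2 p q.
Proof.
rewrite /dist2 /diagproj /=; rewrite ler_sqrt; last first.
  by rewrite addr_ge0 // sqr_ge0.
case: p q => [a b] [c d] /=.
have h := sqr_ge0 (a - c - (b - d)).
have -> : ((c + d) / 2 - (a + b) / 2) ^+ 2 + ((c + d) / 2 - (a + b) / 2) ^+ 2 = ((a-c) + (b-d))^+2 / 2.
  by field.
nra.
Qed.

Lemma total_count (mm nn : nat) (G : {set mtag mm nn})
  (HP : forall i : 'I_mm, #|[set g in G | tagP i g]| = 1%N)
  (HQ : forall j : 'I_nn, #|[set g in G | tagQ j g]| = 1%N)
  (A : 'I_mm -> nat) (B : 'I_nn -> nat) :
  (\sum_(g in G) (\sum_i tagP i g * A i + \sum_j tagQ j g * B j) =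
   \sum_i A i + \sum_j B j)%N.
Proof.
rewrite big_split /=; congr (_ + _)%N.
- rewrite exchange_big /=; apply: eq_bigr => i _.
  by rewrite -big_distrl /= sum_bool_card HP mul1n.
- rewrite exchange_big /=; apply: eq_bigr => j _.
  by rewrite -big_distrl /= sum_bool_card HQ mul1n.
Qed.

Section Main.
Variable R : realType.
Notation pt := (R * R)%type.
Variables P Q : seq pt.
Notation m := (size P).
Notation n := (size Q).
Notation pP i := (nth (0, 0) P i).
Notation pQ j := (nth (0, 0) Q j).

Definition moves (g : mtag m n) : seq (pt * pt) :=
  match g with
  | inl (inl (i, j)) => [:: (pP i, pQ j); (diagproj (pQ j), diagproj (pP i))]
  | inl (inr i) => [:: (pP i, diagproj (pP i))]
  | inr j => [:: (diagproj (pQ j), pQ j)]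
  end.

Lemma src_count g x : count_mem x (map fst (moves g)) =
  (\sum_i tagP i g * (pP i == x) + \sum_j tagQ j g * (diagproj (pQ j) == x))%N.
Proof.
case: g => [[[i j]|i]|j] /=.
- by rewrite !sum_pick addn0.
- by rewrite sum_pick big1 ?addn0.
- by rewrite sum_pick big1 // add0n addn0.
Qed.

Lemma tgt_count g x : count_mem x (map snd (moves g)) =
  (\sum_j tagQ j g * (pQ j == x) + \sum_i tagP i g * (diagproj (pP i) == x))%N.
Proof.
case: g => [[[i j]|i]|j] /=.
- by rewrite !sum_pick addn0.
- by rewrite sum_pick big1 ?addn0.
- by rewrite sum_pick big1 ?addn0.
Qed.

Lemma src_total (G : {set mtag m n}) : aug_matching G -> forall x,
  (\sum_(g in G) count_mem x (map fst (moves g)))%N = count_mem x (hatP P Q).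
Proof.
move=> [HP HQ] x.
rewrite (eq_bigr _ (fun g _ => src_count g x)) total_count //.
rewrite /hatP count_cat count_map.
by rewrite (@sum_nth_count _ (0,0) P (fun y => y == x))
  (@sum_nth_count _ (0,0) Q (fun y => diagproj y == x)).
Qed.

Lemma tgt_total (G : {set mtag m n}) : aug_matching G -> forall x,
  (\sum_(g in G) count_mem x (map snd (moves g)))%N = count_mem x (hatP Q P).
Proof.
move=> [HP HQ] x.
rewrite (eq_bigr _ (fun g _ => tgt_count g x)).
under eq_bigr do rewrite addnC.
rewrite total_count // addnC.
rewrite /hatP count_cat count_map.
by rewrite (@sum_nth_count _ (0,0) P (fun y => diagproj y == x))
  (@sum_nth_count _ (0,0) Q (fun y => y == x)).
Qed.

Definition X := undup (hatP P Q ++ hatP Q P).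
Notation pX a := (nth (0, 0) X a).

Lemma moves_mem g st : st \in moves g -> (st.1 \in X) && (st.2 \in X).
Proof.
have hP (i : 'I_m) : pP i \in P by apply: mem_nth.
have hQ (j : 'I_n) : pQ j \in Q by apply: mem_nth.
rewrite /X /hatP !mem_undup !mem_cat.
case: g => [[[i j]|i]|j] /=; rewrite !inE => H.
- case/orP: H => /eqP -> /=; first by rewrite hP hQ orbT.
  by rewrite (map_f _ (hP i)) (map_f _ (hQ j)) !orbT.
- move/eqP: H => -> /=; by rewrite hP (map_f _ (hP i)) ?orbT.
- move/eqP: H => -> /=; by rewrite hQ (map_f _ (hQ j)) ?orbT.
Qed.

Definition tau (G : {set mtag m n}) (a b : 'I_(size X)) : R :=
  \sum_(g in G) \sum_(st <- moves g) (((pX a == st.1) && (pX b == st.2))%:R : R).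

Lemma uX : uniq X. Proof. exact: undup_uniq. Qed.

Lemma tau_row G : aug_matching G -> forall a,
  \sum_b tau G a b = mset_measure (hatP P Q) (pX a).
Proof.
move=> HG a; rewrite /tau /mset_measure -(src_total _ HG) natr_sum.
rewrite exchange_big /=; apply: eq_bigr => g _.
rewrite exchange_big /= -sum_eq_R big_map big_seq [RHS]big_seq.
apply: eq_bigr => st /moves_mem /andP[_ h2].
under eq_bigr do rewrite -mulnb natrM.
by rewrite -big_distrr /= sum_uniq_one ?uX // mulr1 eq_sym.
Qed.

Lemma tau_col G : aug_matching G -> forall b,
  \sum_a tau G a b = mset_measure (hatP Q P) (pX b).
Proof.
move=> HG b; rewrite /tau /mset_measure -(tgt_total _ HG) natr_sum.
rewrite exchange_big /=; apply: eq_bigr => g _.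
rewrite exchange_big /= -sum_eq_R big_map big_seq [RHS]big_seq.
apply: eq_bigr => st /moves_mem /andP[h1 _].
under eq_bigr do rewrite -mulnb natrM.
by rewrite -big_distrl /= sum_uniq_one ?uX // mul1r eq_sym.
Qed.

Lemma tau_ge0 G a b : 0 <= tau G a b.
Proof. by apply: sumr_ge0 => g _; apply: sumr_ge0 => st _; apply: ler0n. Qed.

Lemma tau_cost G : plan_cost (tau G) =
  \sum_(g in G) \sum_(st <- moves g) dist2 st.1 st.2.
Proof.
rewrite /plan_cost /tau.
under eq_bigr do under eq_bigr do rewrite big_distrl /=.
under eq_bigr do rewrite exchange_big /=.
rewrite exchange_big /=; apply: eq_bigr => g _.
under eq_bigr do under eq_bigr do rewrite big_distrl /=.
under eq_bigr do rewrite exchange_big /=.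
rewrite exchange_big /= big_seq [RHS]big_seq; apply: eq_bigr => st /moves_mem /andP[h1 h2].
have E : forall a b : 'I_(size X),
  ((pX a == st.1) && (pX b == st.2))%:R * dist2 (pX a) (pX b) =
  dist2 st.1 st.2 * ((pX a == st.1)%:R * (pX b == st.2)%:R) :> R.
  move=> a b; case: eqP => [->|_]; case: eqP => [->|_] //=;
  by rewrite ?mul0r ?mulr0 ?mul1r ?mulr1.
under eq_bigr do under eq_bigr do rewrite E.
under eq_bigr do rewrite -big_distrr -big_distrr /= sum_uniq_one ?uX //.
under eq_bigr do rewrite mulr1.
by rewrite -big_distrr /= sum_uniq_one ?uX // mulr1.
Qed.

Lemma moves_cost g : \sum_(st <- moves g) dist2 st.1 st.2 <= 2 * tag_cost g.
Proof.
have d0 (p q : pt) : 0 <= dist2 p q by apply: sqrtr_ge0.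
case: g => [[[i j]|i]|j]; rewrite !big_cons big_nil /= addr0.
- have := @diag_lip R (pP i) (pQ j); lra.
- have := d0 (pP i) (diagproj (pP i)); lra.
- have := d0 (diagproj (pQ j)) (pQ j); lra.
Qed.

End Main.

Local Open Scope classical_set_scope.

Theorem mainTheorem1 (R : realType) (P Q : seq (R * R)) :
  dOT (undup (hatP P Q ++ hatP Q P))
      (mset_measure (hatP P Q)) (mset_measure (hatP Q P))
  <= 2 * dW P Q.
Proof.
set S := [set c | exists G : {set mtag (size P) (size Q)},
      aug_matching G /\ c = matching_cost G].
have key : forall G : {set mtag (size P) (size Q)}, aug_matching G ->
  dOT (undup (hatP P Q ++ hatP Q P))
      (mset_measure (hatP P Q)) (mset_measure (hatP Q P)) <= 2 * matching_cost G.
  move=> G HG.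
  apply: (@le_trans _ _ (plan_cost (tau R P Q G))).
    apply: ge_inf; last first.
      exists (tau R P Q G); split => //; split; [exact: tau_ge0|exact: tau_row R P Q G HG|exact: tau_col R P Q G HG].
    exists 0 => c [t [[h0 _ _] ->]].
    by apply: sumr_ge0 => a _; apply: sumr_ge0 => b _; apply: mulr_ge0 => //; apply: sqrtr_ge0.
  rewrite (tau_cost R P Q G) /matching_cost big_distrr /=.
  by apply: ler_sum => g _; apply: (moves_cost R P Q).
have ne : S !=set0.
  pose G0 : {set mtag (size P) (size Q)} :=
    finset (fun g : mtag (size P) (size Q) => if g is inl (inl _) then false else true).
  exists (matching_cost G0); exists G0; split => //; split.
  - move=> i; rewrite (_ : [set g in G0 | tagP i g] = [set inl (inr i)]%SET) ?cards1 //.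
    apply/finset.setP => -[[[i' j']|i']|j']; rewrite !inE //=.
  - move=> j; rewrite (_ : [set g in G0 | tagQ j g] = [set inr j]%SET) ?cards1 //.
    apply/finset.setP => -[[[i' j']|i']|j']; rewrite !inE //=.
have h : dOT (undup (hatP P Q ++ hatP Q P))
      (mset_measure (hatP P Q)) (mset_measure (hatP Q P)) / 2 <= dW P Q.
  apply: lb_le_inf => // c [G [HG ->]].
  have := key G HG; lra.
lra.
Qed.
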